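(* For each $a\in\{1,\dots,n\}$, the anticommutator $\{\psi_a,\psi_a^*\}=\psi_a\psi_a^*+\psi_a^*\psi_a$ belongs to the center of $\mathrm{Cl}_q(n,k)$ and satisfies $\{\psi_a,\psi_a^*\}^2=1$.
   Context: Let $\mathbb{k}$ be a field of characteristic different from $2$, let $q\in\mathbb{k}^\times$, and let $n,k$ be positive integers. The quantum Clifford algebra $\mathrm{Cl}_q(n,k)$ is the unital associative $\mathbb{k}$-algebra generated by $\psi_a,\psi_a^*,\omega_a,\omega_a^{-1}$ for $a\in\{1,\dots,n\}$, subject to the relations (for all $a,b\in\{1,\dots,n\}$): $\omega_a\omega_b=\omega_b\omega_a$; $\omega_a\omega_a^{-1}=1$; $\omega_a\psi_b=q^{\delta_{ab}}\psi_b\omega_a$; $\omega_a\psi_b^*=q^{-\delta_{ab}}\psi_b^*\omega_a$; $\psi_a\psi_b+\psi_b\psi_a=0$; $\psi_a^*\psi_b^*+\psi_b^*\psi_a^*=0$; $\psi_a\psi_a^*+q^k\psi_a^*\psi_a=\omega_a^{-k}$; $\psi_a\psi_a^*+q^{-k}\psi_a^*\psi_a=\omega_a^{k}$; and $\psi_a\psi_b^*+\psi_b^*\psi_a=0$ if $a\neq b$. *)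

(* Defs.v *)
From HB Require Import structures.
From mathcomp Require Import all_boot all_order all_algebra.
Set Implicit Arguments. Unset Strict Implicit. Unset Printing Implicit Defensive.
Import GRing.Theory.
Local Open Scope ring_scope.

(* The defining relations of Cl_q(n,k), for a family of elements
   psi a, psis a (the starred psi_a), om a (= omega_a), omi a (= omega_a^{-1})
   of a F-algebra A, indexed by a : 'I_n. *)
Definition ClqRelations (F : fieldType) (A : algType F) (n k : nat) (q : F)
  (psi psis om omi : 'I_n -> A) : Prop :=
  (forall a b : 'I_n, om a * om b = om b * om a)
  /\ (forall a : 'I_n, om a * omi a = 1)
  /\ (forall a b : 'I_n, om a * psi b = (q ^+ (a == b)) *: (psi b * om a))
  /\ (forall a b : 'I_n, om a * psis b = (q ^- (a == b)) *: (psis b * om a))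
  /\ (forall a b : 'I_n, psi a * psi b + psi b * psi a = 0)
  /\ (forall a b : 'I_n, psis a * psis b + psis b * psis a = 0)
  /\ (forall a : 'I_n, psi a * psis a + (q ^+ k) *: (psis a * psi a) = omi a ^+ k)
  /\ (forall a : 'I_n, psi a * psis a + (q ^- k) *: (psis a * psi a) = om a ^+ k)
  /\ (forall a b : 'I_n, a != b -> psi a * psis b + psis b * psi a = 0).

Inductive in_subalg (F : fieldType) (A : algType F) (S : A -> Prop) : A -> Prop :=
  | subalg_base x : S x -> in_subalg S x
  | subalg_one : in_subalg S 1
  | subalg_add x y : in_subalg S x -> in_subalg S y -> in_subalg S (x + y)
  | subalg_mul x y : in_subalg S x -> in_subalg S y -> in_subalg S (x * y)
  | subalg_scale (c : F) x : in_subalg S x -> in_subalg S (c *: x).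

Definition Clq_generators (F : fieldType) (A : algType F) (n : nat)
  (psi psis om omi : 'I_n -> A) : A -> Prop :=
  fun x => exists a : 'I_n, [\/ x = psi a, x = psis a, x = om a | x = omi a].

(* Main.v *)
Require Import Defs.
From HB Require Import structures.
From mathcomp Require Import all_boot all_order all_algebra.
Import GRing.Theory.
Local Open Scope ring_scope.

Lemma two_zero (F : fieldType) (A : algType F) (x : A): (2%:R:F) != 0 -> x + x = 0 -> x = 0.
Proof. move=> h2 hx. have: (2%:R:F) *: x = 0 by rewrite scaler_nat mulr2n. move/eqP; rewrite scaler_eq0 (negbTE h2) /= => /eqP //. Qed.

Lemma pow_inv (R : ringType) (x y : R) m : x * y = 1 -> x ^+ m * y ^+ m = 1.
Proof. move=> h; elim: m => [|m IH]; first by rewrite !expr0 mulr1. by rewrite exprSr exprS mulrA -(mulrA _ x) h mulr1 IH. Qed.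

Theorem lemma3p7 (F : fieldType) (hF : (2%:R : F) != 0) (q : F) (hq : q != 0)
  (n k : nat) (hn : (0 < n)%N) (hk : (0 < k)%N)
  (A : algType F) (psi psis om omi : 'I_n -> A)
  (hrel : ClqRelations k q psi psis om omi) :
  forall a : 'I_n,
    (forall x : A, in_subalg (Clq_generators psi psis om omi) x ->
       (psi a * psis a + psis a * psi a) * x = x * (psi a * psis a + psis a * psi a))
    /\ (psi a * psis a + psis a * psi a) ^+ 2 = 1.
Proof.
move: hrel => [hcom [hinv [hopsi [hopsis [hpp [hss [hrel1 [hrel2 hanti]]]]]]]].
have psi2 : forall b, psi b * psi b = 0 by move=> b; apply: two_zero hF (hpp b b).
have psis2 : forall b, psis b * psis b = 0 by move=> b; apply: two_zero hF (hss b b).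
have qe : forall e : nat, q ^+ e * q ^- e = 1 by move=> e; rewrite divff // expf_neq0.
have qe' : forall e : nat, q ^- e * q ^+ e = 1 by move=> e; rewrite mulVf // expf_neq0.
have commX : forall b c, GRing.comm (om b) (psi c * psis c).
  move=> b c; rewrite /GRing.comm mulrA hopsi -scalerAl -[psi c * om b * psis c]mulrA hopsis scalerAr scalerA qe scale1r mulrA //.
have commY : forall b c, GRing.comm (om b) (psis c * psi c).
  move=> b c; rewrite /GRing.comm mulrA hopsis -scalerAl -[psis c * om b * psi c]mulrA hopsi scalerAr scalerA qe' scale1r mulrA //.
have vu : forall b, omi b ^+ k * om b ^+ k = 1.
  move=> b.
  have uv := @pow_inv _ _ _ k (hinv b).
  have cX : GRing.comm (psi b * psis b) (om b ^+ k) by apply: commrX; apply: commr_sym; apply: commX.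
  have cY : GRing.comm (psis b * psi b) (om b ^+ k) by apply: commrX; apply: commr_sym; apply: commY.
  by rewrite -hrel1 mulrDl -scalerAl cX cY scalerAr -mulrDr hrel1.
have linv : forall b, omi b * om b = 1.
  move=> b.
  have hL : omi b ^+ k * om b ^+ k.-1 * om b = 1 by rewrite -mulrA -exprSr prednK // vu.
  have -> : omi b = omi b ^+ k * om b ^+ k.-1.
    by rewrite -{1}[omi b]mul1r -{1}hL -mulrA hinv mulr1.
  exact: hL.
move=> a.
set c := psi a * psis a + psis a * psi a.
have comm_om : forall b, c * om b = om b * c.
  by move=> b; rewrite /c mulrDl mulrDr commX commY.
have comm_omi : forall b, c * omi b = omi b * c.
  by move=> b; rewrite -[c * omi b]mul1r -(linv b) -!mulrA (mulrA (om b)) -comm_om -mulrA hinv mulr1.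
have comm_psi : forall b, c * psi b = psi b * c.
  move=> b; case: (eqVneq b a) => [->|hba].
    by rewrite /c mulrDl mulrDr -!mulrA psi2 mulr0 !mulrA psi2 mul0r addr0 add0r.
  have ac1 : psi b * psi a = - (psi a * psi b) by apply/eqP; rewrite -addr_eq0 hpp.
  have ac2 : psi b * psis a = - (psis a * psi b) by apply/eqP; rewrite -addr_eq0 hanti.
  by rewrite /c mulrDl mulrDr !mulrA ac1 ac2 !mulNr -!mulrA ac1 ac2 !mulrN !opprK.
have comm_psis : forall b, c * psis b = psis b * c.
  move=> b; case: (eqVneq b a) => [->|hba].
    by rewrite /c mulrDl mulrDr -!mulrA psis2 mulr0 !mulrA psis2 mul0r addr0 add0r.
  have ac1 : psis b * psis a = - (psis a * psis b) by apply/eqP; rewrite -addr_eq0 hss.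
  have ac2 : psis b * psi a = - (psi a * psis b).
    by apply/eqP; rewrite -addr_eq0 addrC hanti // eq_sym.
  by rewrite /c mulrDl mulrDr !mulrA ac1 ac2 !mulNr -!mulrA ac1 ac2 !mulrN !opprK.
split.
  move=> x; elim => {x} [x [b [->|->|->|->]] | | x y _ IHx _ IHy | x y _ IHx _ IHy | s x _ IHx].
  - exact: comm_psi.
  - exact: comm_psis.
  - exact: comm_om.
  - exact: comm_omi.
  - by rewrite mulr1 mul1r.
  - by rewrite mulrDr [(x + y) * c]mulrDl IHx IHy.
  - by rewrite mulrA IHx -mulrA IHy mulrA.
  - by rewrite -scalerAr IHx scalerAl.
have Xpsi : psi a * psis a * psi a = omi a ^+ k * psi a.
  by rewrite -hrel1 mulrDl -scalerAl -[psis a * psi a * psi a]mulrA psi2 mulr0 scaler0 addr0.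
have psisX : q ^+ k *: (psis a * (psi a * psis a)) = omi a ^+ k * psis a.
  by rewrite -hrel1 mulrDl -[psi a * psis a * psis a]mulrA psis2 mulr0 add0r -scalerAl mulrA.
have XX : (psi a * psis a) * (psi a * psis a) = omi a ^+ k * (psi a * psis a).
  by rewrite !mulrA Xpsi.
have psisX' : psis a * (psi a * psis a) = q ^- k *: (omi a ^+ k * psis a).
  by rewrite -psisX scalerA qe' scale1r.
have YY : (psis a * psi a) * (psis a * psi a) = omi a ^+ k * (q ^- k *: (psis a * psi a)).
  by rewrite mulrA -(mulrA (psis a)) psisX' -scalerAl -scalerAr mulrA.
have XY : (psi a * psis a) * (psis a * psi a) = 0.
  by rewrite mulrA -(mulrA (psi a)) psis2 mulr0 mul0r.
have YX : (psis a * psi a) * (psi a * psis a) = 0.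
  by rewrite mulrA -(mulrA (psis a)) psi2 mulr0 mul0r.
by rewrite expr2 /c mulrDl !mulrDr XX YY XY YX addr0 add0r -mulrDr hrel2 vu.
Qed.
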